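(* Let $\mathcal P$ be a polycyclic presentation on $g_1,\ldots,g_n$ with $r_1<\infty$, assume the subpresentation $\mathcal P^{[2]}$ is consistent, and assume there is an endomorphism $\sigma$ of $H^{[2]}$ with $\sigma(g_j)=g^{a_{1,j}}$ for $2\le j\le n$. (a) If $c(g_jg_1^{r_1})=c(g_j\,g^{e_1})$ holds for all $j>1$, then $\sigma^{r_1}$ equals the inner automorphism $x\mapsto (g^{e_1})^{-1}x\,g^{e_1}$ of $H^{[2]}$, and $\sigma$ is an automorphism. (b) If moreover $c(g_1^{r_1+1})=c(g_1\,g^{e_1})$ holds, then $\sigma$ fixes (the element represented by) $g^{e_1}$.
   Context: A polycyclic presentation $\mathcal P$ on generators $g_1,\ldots,g_n$ consists of $r_1,\ldots,r_n\in\mathbb N\cup\{\infty\}$ and integers $e_{i,k},a_{i,j,k},b_{i,j,k}$ ($1\le i<j\le n$, $1\le k\le n$) with $0\le e_{i,k},a_{i,j,k},b_{i,j,k}<r_k$ whenever $r_k<\infty$, and has defining relations $g_i^{r_i}=g^{e_i}$ (for $r_i<\infty$), $g_jg_i=g_ig^{a_{i,j}}$ (for $i<j$), $g_jg_i^{-1}=g_i^{-1}g^{b_{i,j}}$ (for $i<j$, $r_i=\infty$), where $g^{e_i}=g_{i+1}^{e_{i,i+1}}\cdots g_n^{e_{i,n}}$, $g^{a_{i,j}}=g_{i+1}^{a_{i,j,i+1}}\cdots g_n^{a_{i,j,n}}$, $g^{b_{i,j}}=g_{i+1}^{b_{i,j,i+1}}\cdots g_n^{b_{i,j,n}}$ (with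 $g_k^x$ for $x<0$ meaning $(g_k^{-1})^{|x|}$). From the presentation one computes integers $c_{i,j,k},d_{i,j,k},f_{i,k}$ (in $[0,r_k)$ when $r_k<\infty$) such that in the presented group $g_j^{-1}g_i=g_ig^{c_{i,j}}$ ($i<j$, $r_j=\infty$), $g_j^{-1}g_i^{-1}=g_i^{-1}g^{d_{i,j}}$ ($i<j$, $r_i=r_j=\infty$), $g_i^{-1}=g_i^{r_i-1}g^{f_i}$ ($r_i<\infty$). Let $M$ be the free monoid on $\{g_1^{\pm1},\ldots,g_n^{\pm1}\}$. A collection step replaces a subword equal to the left-hand side of one of these six kinds of relations by its right-hand side, or deletes $g_ig_i^{-1}$ or $g_i^{-1}g_i$; a word admitting no step is reduced (of the form $g_1^{x_1}\cdots g_n^{x_n}$ with $0\le x_i<r_i$ if $r_i<\infty$). The collection-to-the-left algorithm applies steps, always choosing the leftmost occurrence of a non-reduced subword involving a generator of smallest index (lower index has priority), until the word is reduced; $c\colon M\to M$ maps a word to the result. $\mathcal P^{[2]}$ is the presentation on $g_2,\ldots,g_n$ consisting of those relations above with $i\ge2$; $H^{[2]}$ is the group it defines. $\mathcal P^{[2]}$ is consistent if every element of $H^{[2]}$ is represented by exactly one reduced word in $g_2,\ldots,g_n$. *)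

(* Defs.v *)
From mathcomp Require Import all_boot all_order all_algebra.
Set Implicit Arguments. Unset Strict Implicit. Unset Printing Implicit Defensive.
Import Order.TTheory GRing.Theory Num.Theory.

(* A letter (k, true) is g_k, a letter (k, false) is g_k^{-1}. *)
Definition letter := (nat * bool)%type.
Definition word := seq letter.

(* Data of a polycyclic presentation on g_1,...,g_n (1-based indices).
   pr i = None means r_i = infinity.  pc, pd, pf are the derived data
   c_{i,j,k}, d_{i,j,k}, f_{i,k}. *)
Record pcp := Pcp {
  pn : nat;
  pr : nat -> option nat;
  pe : nat -> nat -> int;
  pa : nat -> nat -> nat -> int;
  pb : nat -> nat -> nat -> int;
  pc : nat -> nat -> nat -> int;
  pd : nat -> nat -> nat -> int;
  pf : nat -> nat -> int }.

Definition gpow (k : nat) (x : int) : word :=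
  match x with
  | Posz m => nseq m (k, true)
  | Negz m => nseq m.+1 (k, false)
  end.

(* g^v relative to i : g_{i+1}^{v (i+1)} ... g_n^{v n} *)
Definition gvec (P : pcp) (v : nat -> int) (i : nat) : word :=
  flatten [seq gpow k (v k) | k <- iota i.+1 (pn P - i)].

Definition winv (w : word) : word := rev [seq (l.1, ~~ l.2) | l <- w].

Definition in_range (P : pcp) (k : nat) (x : int) : Prop :=
  forall rk, pr P k = Some rk -> (0 <= x)%R /\ (x < rk%:Z)%R.

Definition is_pcp (P : pcp) : Prop :=
  (forall i rk, 1 <= i <= pn P -> pr P i = Some rk -> 0 < rk) /\
  (forall i k ri, 1 <= i -> i < k <= pn P -> pr P i = Some ri ->
     in_range P k (pe P i k)) /\
  (forall i j k, 1 <= i -> i < j <= pn P -> i < k <= pn P ->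
     in_range P k (pa P i j k)) /\
  (forall i j k, 1 <= i -> i < j <= pn P -> i < k <= pn P -> pr P i = None ->
     in_range P k (pb P i j k)) /\
  (forall i j k, 1 <= i -> i < j <= pn P -> i < k <= pn P -> pr P j = None ->
     in_range P k (pc P i j k)) /\
  (forall i j k, 1 <= i -> i < j <= pn P -> i < k <= pn P ->
     pr P i = None -> pr P j = None -> in_range P k (pd P i j k)) /\
  (forall i k ri, 1 <= i -> i < k <= pn P -> pr P i = Some ri ->
     in_range P k (pf P i k)).

Definition wf (P : pcp) (s : nat) (w : word) : bool :=
  all (fun l => (s <= l.1) && (l.1 <= pn P)) w.

(* Defining relations of P^{[s]} (those with i >= s), together with the
   free cancellations g_i g_i^{-1} = 1 = g_i^{-1} g_i for s <= i <= n. *)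
Inductive defrel (P : pcp) (s : nat) : word -> word -> Prop :=
  | dr_pow i ri : s <= i <= pn P -> pr P i = Some ri ->
      defrel P s (nseq ri (i, true)) (gvec P (pe P i) i)
  | dr_a i j : s <= i -> i < j <= pn P ->
      defrel P s [:: (j, true); (i, true)] ((i, true) :: gvec P (pa P i j) i)
  | dr_b i j : s <= i -> i < j <= pn P -> pr P i = None ->
      defrel P s [:: (j, true); (i, false)] ((i, false) :: gvec P (pb P i j) i)
  | dr_cancel i b : s <= i <= pn P -> defrel P s [:: (i, b); (i, ~~ b)] [::].

Inductive cong (R : word -> word -> Prop) : word -> word -> Prop :=
  | cong_refl w : cong R w w
  | cong_sym u v : cong R u v -> cong R v u
  | cong_trans u v w : cong R u v -> cong R v w -> cong R u w
  | cong_rel u v l r : R l r -> cong R (u ++ l ++ v) (u ++ r ++ v).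

(* equality in the group H^{[s]} presented by P^{[s]} (H^{[1]} = H) *)
Definition eqH (P : pcp) (s : nat) : word -> word -> Prop := cong (defrel P s).

(* The derived data c, d, f are the ones computed from the presentation:
   g^{c_{i,j}} = (g^{a_{i,j}})^{-1}, g^{d_{i,j}} = (g^{b_{i,j}})^{-1},
   g^{f_i} = (g^{e_i})^{-1}, all holding in H^{[i+1]}; this makes the
   relations g_j^{-1} g_i = g_i g^{c_{i,j}}, g_j^{-1} g_i^{-1} = g_i^{-1} g^{d_{i,j}},
   g_i^{-1} = g_i^{r_i-1} g^{f_i} hold in H^{[i]}. *)
Definition derived_ok (P : pcp) : Prop :=
  (forall i j, 1 <= i -> i < j <= pn P -> pr P j = None ->
     eqH P i.+1 (gvec P (pa P i j) i ++ gvec P (pc P i j) i) [::]) /\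
  (forall i j, 1 <= i -> i < j <= pn P -> pr P i = None -> pr P j = None ->
     eqH P i.+1 (gvec P (pb P i j) i ++ gvec P (pd P i j) i) [::]) /\
  (forall i ri, 1 <= i <= pn P -> pr P i = Some ri ->
     eqH P i.+1 (gvec P (pe P i) i ++ gvec P (pf P i) i) [::]).

Definition reduced (P : pcp) (s : nat) (u : word) : Prop :=
  exists x : nat -> int, (forall k, s <= k <= pn P -> in_range P k (x k)) /\
    u = gvec P x s.-1.

Definition consistent (P : pcp) (s : nat) : Prop :=
  forall w, wf P s w -> exists! u, reduced P s u /\ eqH P s w u.

Definition opt {A} (b : bool) (x : A) : seq A := if b then [:: x] else [::].

(* Non-reduced subwords starting at the beginning of s:
   (smallest generator index involved, length, right-hand side). *)
Definition redexes (P : pcp) (s : word) : seq (nat * nat * word) :=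
  let n := pn P in
  match s with
  | [::] => [::]
  | (j, bj) :: t =>
    (match t with
     | (i, bi) :: _ =>
       let ok := [&& 1 <= i, i < j & j <= n] in
       (match bj, bi with
        | true, true => opt ok (i, 2, (i, true) :: gvec P (pa P i j) i)
        | true, false => opt (ok && (pr P i == None))
                           (i, 2, (i, false) :: gvec P (pb P i j) i)
        | false, true => opt (ok && (pr P j == None))
                           (i, 2, (i, true) :: gvec P (pc P i j) i)
        | false, false => opt [&& ok, pr P i == None & pr P j == None]
                           (i, 2, (i, false) :: gvec P (pd P i j) i)
        end) ++
       opt [&& i == j, bi != bj, 1 <= j & j <= n] (j, 2, [::])
     | [::] => [::]
     end) ++
    (match pr P j with
     | Some rj =>
       (if bj then
          opt [&& 1 <= j, j <= n, 0 < rj & take rj s == nseq rj (j, true)]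
              (j, rj, gvec P (pe P j) j)
        else
          opt ((1 <= j) && (j <= n))
              (j, 1, nseq rj.-1 (j, true) ++ gvec P (pf P j) j))
     | None => [::]
     end)
  end.

Definition candidates (P : pcp) (w : word) : seq (nat * (nat * nat * word)) :=
  flatten [seq [seq (p, x) | x <- redexes P (drop p w)] | p <- iota 0 (size w)].

(* priority: smallest generator index first, then leftmost; first listed on ties *)
Definition better (c1 c2 : nat * (nat * nat * word)) : bool :=
  let: (p1, (i1, _, _)) := c1 in
  let: (p2, (i2, _, _)) := c2 in
  (i1 < i2) || ((i1 == i2) && (p1 < p2)).

Definition choose_redex (P : pcp) (w : word) : option (nat * (nat * nat * word)) :=
  foldl (fun best c => match best with
                       | None => Some c
                       | Some b => if better c b then Some c else best
                       end) None (candidates P w).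

(* one collection step, None if w is reduced *)
Definition step (P : pcp) (w : word) : option word :=
  match choose_redex P w with
  | None => None
  | Some (p, (_, len, rhs)) => Some (take p w ++ rhs ++ drop (p + len) w)
  end.

Fixpoint collect_fuel (P : pcp) (k : nat) (w : word) : option word :=
  match step P w with
  | None => Some w
  | Some w' => match k with 0 => None | k'.+1 => collect_fuel P k' w' end
  end.

(* collects P w v : the collection-to-the-left algorithm terminates on w with result v,
   i.e. c(w) = v *)
Definition collects (P : pcp) (w v : word) : Prop :=
  exists k, collect_fuel P k w = Some v.

Definition same_collection (P : pcp) (w1 w2 : word) : Prop :=
  exists v, collects P w1 v /\ collects P w2 v.

(* sigma (acting on representative words) induces an endomorphism of H^{[s]} *)
Definition is_endo (P : pcp) (s : nat) (sig : word -> word) : Prop :=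
  (forall w, wf P s w -> wf P s (sig w)) /\
  (forall u v, wf P s u -> wf P s v -> eqH P s u v -> eqH P s (sig u) (sig v)) /\
  (forall u v, wf P s u -> wf P s v -> eqH P s (sig (u ++ v)) (sig u ++ sig v)).

Definition is_auto (P : pcp) (s : nat) (sig : word -> word) : Prop :=
  is_endo P s sig /\
  (forall u v, wf P s u -> wf P s v -> eqH P s (sig u) (sig v) -> eqH P s u v) /\
  (forall y, wf P s y -> exists x, wf P s x /\ eqH P s (sig x) y).

(* Main.v *)
Require Import Defs.
From mathcomp Require Import all_boot all_order all_algebra.
From Stdlib Require Import Setoid Morphisms.
Set Implicit Arguments. Unset Strict Implicit. Unset Printing Implicit Defensive.

Lemma cong_ctx R a b u v : cong R u v -> cong R (a ++ u ++ b) (a ++ v ++ b).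
Proof.
elim=> [w|u' v' _ IH|u' v' w' _ IH1 _ IH2|u' v' l r Hr].
- exact: cong_refl.
- exact: cong_sym.
- exact: cong_trans IH2.
- have -> : a ++ (u' ++ l ++ v') ++ b = (a ++ u') ++ l ++ (v' ++ b) by rewrite !catA.
  have -> : a ++ (u' ++ r ++ v') ++ b = (a ++ u') ++ r ++ (v' ++ b) by rewrite !catA.
  exact: cong_rel.
Qed.

Global Instance eqH_equiv P s : Equivalence (eqH P s).
Proof.
split; [exact: cong_refl| exact: cong_sym| move=> x y z; exact: cong_trans].
Qed.

Global Instance cat_proper P s : Proper (eqH P s ==> eqH P s ==> eqH P s) (@cat letter).
Proof.
move=> u u' Hu v v' Hv.
apply: (cong_trans (v := u' ++ v)).
  by have := cong_ctx [::] v Hu; rewrite /= .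
by have := cong_ctx u' [::] Hv; rewrite !cats0.
Qed.

Global Instance cons_proper P s : Proper (eq ==> eqH P s ==> eqH P s) (@cons letter).
Proof.
move=> l l' <- u u' Hu.
by have := cong_ctx [:: l] [::] Hu; rewrite !cats0.
Qed.

Lemma rel_eqH P s l r : defrel P s l r -> eqH P s l r.
Proof. by move=> H; have := @cong_rel _ [::] [::] _ _ H; rewrite !cats0. Qed.

Lemma defrel_mono P s s' l r : s <= s' -> defrel P s' l r -> defrel P s l r.
Proof.
move=> ss' [i ri /andP[H1 H2] H3|i j H1 H2|i j H1 H2 H3|i b /andP[H1 H2]].
- by apply: dr_pow => //; rewrite (leq_trans ss' H1).
- by apply: dr_a => //; rewrite (leq_trans ss' H1).
- by apply: dr_b => //; rewrite (leq_trans ss' H1).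
- by apply: dr_cancel; rewrite (leq_trans ss' H1).
Qed.

Lemma eqH_mono P s s' u v : s <= s' -> eqH P s' u v -> eqH P s u v.
Proof.
move=> ss'; elim=> [w|u' v' _ IH|u' v' w' _ IH1 _ IH2|u' v' l r Hr].
- reflexivity.
- by symmetry.
- by transitivity v'.
- by apply: cong_rel; apply: defrel_mono Hr.
Qed.

Lemma winv_cat u v : winv (u ++ v) = winv v ++ winv u.
Proof. by rewrite /winv map_cat rev_cat. Qed.

Lemma winvK w : winv (winv w) = w.
Proof.
rewrite /winv map_rev revK -map_comp.
by elim: w => //= [[k b] w ->]; rewrite negbK.
Qed.

Lemma wf_cat P s u v : wf P s (u ++ v) = wf P s u && wf P s v.
Proof. by rewrite /wf all_cat. Qed.

Lemma wf_winv P s w : wf P s (winv w) = wf P s w.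
Proof. by rewrite /wf /winv all_rev all_map. Qed.

Lemma cancel_r P s w : wf P s w -> eqH P s (w ++ winv w) [::].
Proof.
elim: w => [|[k b] w IH] /=; first reflexivity.
move=> /andP[Hk Hw].
rewrite /winv /= rev_cons -cats1 -/(winv w) catA.
rewrite (IH Hw) /=.
by apply: rel_eqH; apply: dr_cancel.
Qed.

Lemma cancel_l P s w : wf P s w -> eqH P s (winv w ++ w) [::].
Proof.
move=> H; have := @cancel_r P s (winv w); rewrite winvK; apply.
by rewrite wf_winv.
Qed.

From mathcomp Require Import zify.

Definition goodl P (l : letter) := (1 <= l.1 <= pn P) && (l.2 || (pr P l.1 == None)).

Lemma gvec_bounds P v i : all (fun l => (i < l.1) && (l.1 <= pn P)) (gvec P v i).
Proof.
apply/allP => l /flatten_mapP [k]; rewrite mem_iota => /andP[H1 H2].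
case: (v k) => m; rewrite /gpow mem_nseq => /andP[_ /eqP ->] /=; apply/andP; split; lia.
Qed.

Lemma gvec_wf P v i : wf P i.+1 (gvec P v i).
Proof.
apply/allP => l Hl; have /allP/(_ l Hl)/andP[H1 H2] := gvec_bounds P v i.
by rewrite H1 H2.
Qed.

Lemma gvec_good P v i : (forall k, i < k <= pn P -> in_range P k (v k)) ->
  all (goodl P) (gvec P v i).
Proof.
move=> Hr; apply/allP => l /flatten_mapP [k]; rewrite mem_iota => /andP[H1 H2].
have Hk : i < k <= pn P by apply/andP; split; lia.
have := Hr k Hk; case: (v k) => m Hin; rewrite /gpow mem_nseq => /andP[_ /eqP ->];
  rewrite /goodl /=.
- by apply/andP; split => //; apply/andP; split; lia.
- apply/andP; split; first by apply/andP; split; lia.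
  case E: (pr P k) => [rk|] //.
  by have [] := Hin rk E.
Qed.

Lemma eqH_ctx P s a b u v : eqH P s u v -> eqH P s (a ++ u ++ b) (a ++ v ++ b).
Proof. exact: cong_ctx. Qed.

Section Rels.
Variable P : pcp.
Hypothesis Hpcp : is_pcp P.
Hypothesis Hder : derived_ok P.

Lemma rel_c s i j : 1 <= s <= i -> i < j <= pn P -> pr P j = None ->
  eqH P s [:: (j,false); (i,true)] ((i,true) :: gvec P (pc P i j) i).
Proof.
move=> /andP[H1 H2] Hij Hj.
set A := gvec P (pa P i j) i; set C := gvec P (pc P i j) i.
have HAC : eqH P s (A ++ C) [::].
  apply: (@eqH_mono _ _ i.+1); first lia.
  by apply: Hder.1 => //; lia.
have Ha : eqH P s [:: (j,true); (i,true)] ((i,true) :: A).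
  by apply: rel_eqH; apply: dr_a.
transitivity ([:: (j,false); (i,true)] ++ (A ++ C)).
  rewrite HAC cats0; reflexivity.
transitivity ([:: (j,false)] ++ ((i,true) :: A) ++ C); first reflexivity.
rewrite -Ha /=.
transitivity ([::] ++ [:: (j,false); (j, ~~ false)] ++ ((i,true) :: C)); first reflexivity.
have Hc : eqH P s [:: (j,false); (j, ~~ false)] [::].
  by apply: rel_eqH; apply: dr_cancel; lia.
by rewrite Hc; reflexivity.
Qed.

Lemma rel_d s i j : 1 <= s <= i -> i < j <= pn P -> pr P i = None -> pr P j = None ->
  eqH P s [:: (j,false); (i,false)] ((i,false) :: gvec P (pd P i j) i).
Proof.
move=> /andP[H1 H2] Hij Hi Hj.
set A := gvec P (pb P i j) i; set C := gvec P (pd P i j) i.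
have HAC : eqH P s (A ++ C) [::].
  apply: (@eqH_mono _ _ i.+1); first lia.
  by apply: Hder.2.1 => //; lia.
have Ha : eqH P s [:: (j,true); (i,false)] ((i,false) :: A).
  by apply: rel_eqH; apply: dr_b.
transitivity ([:: (j,false); (i,false)] ++ (A ++ C)).
  rewrite HAC cats0; reflexivity.
transitivity ([:: (j,false)] ++ ((i,false) :: A) ++ C); first reflexivity.
rewrite -Ha /=.
transitivity ([::] ++ [:: (j,false); (j, ~~ false)] ++ ((i,false) :: C)); first reflexivity.
have Hc : eqH P s [:: (j,false); (j, ~~ false)] [::].
  by apply: rel_eqH; apply: dr_cancel; lia.
by rewrite Hc; reflexivity.
Qed.

Lemma rel_f s j rj : 1 <= s <= j -> j <= pn P -> pr P j = Some rj ->
  eqH P s [:: (j,false)] (nseq rj.-1 (j,true) ++ gvec P (pf P j) j).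
Proof.
move=> /andP[H1 H2] Hj Hr.
have rpos : 0 < rj by apply: Hpcp.1 Hr; lia.
set A := gvec P (pe P j) j; set C := gvec P (pf P j) j.
have HAC : eqH P s (A ++ C) [::].
  apply: (@eqH_mono _ _ j.+1); first lia.
  by apply: Hder.2.2 Hr; lia.
have Ha : eqH P s (nseq rj (j,true)) A.
  by apply: rel_eqH; apply: dr_pow Hr; lia.
transitivity ([:: (j,false)] ++ (A ++ C)).
  rewrite HAC cats0; reflexivity.
rewrite catA -Ha.
case: rj rpos {Hr Ha} => // r _ /=.
transitivity ([::] ++ [:: (j,false); (j, ~~ false)] ++ (nseq r (j,true) ++ C)); first reflexivity.
have Hc : eqH P s [:: (j,false); (j, ~~ false)] [::].
  by apply: rel_eqH; apply: dr_cancel; lia.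
by rewrite Hc; reflexivity.
Qed.

Definition vsel (bj bi : bool) i j :=
  match bj, bi with
  | true, true => pa P i j | true, false => pb P i j
  | false, true => pc P i j | false, false => pd P i j end.

Lemma rel_pair s i j bj bi : 1 <= s <= i -> i < j <= pn P ->
  bi || (pr P i == None) -> bj || (pr P j == None) ->
  eqH P s [:: (j,bj); (i,bi)] ((i,bi) :: gvec P (vsel bj bi i j) i).
Proof.
move=> Hs Hij.
case: bj; case: bi => //= Hi Hj.
- by apply: rel_eqH; apply: dr_a => //; lia.
- by apply: rel_eqH; apply: dr_b => //; [lia| apply/eqP].
- by apply: rel_c => //; apply/eqP.
- by apply: rel_d => //; apply/eqP.
Qed.

Lemma vsel_range i j bj bi : 1 <= i -> i < j <= pn P ->
  bi || (pr P i == None) -> bj || (pr P j == None) ->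
  forall k, i < k <= pn P -> in_range P k (vsel bj bi i j k).
Proof.
have [_ [_ [Ha [Hb [Hc [Hd _]]]]]] := Hpcp.
move=> Hi Hij; case: bj; case: bi => //= Hbi Hbj k Hk.
- exact: Ha.
- by apply: Hb => //; apply/eqP.
- by apply: Hc => //; apply/eqP.
- by apply: Hd => //; apply/eqP.
Qed.

Lemma redex_shape s x : x \in redexes P s ->
  (exists j bj i bi t, [/\ s = (j,bj)::(i,bi)::t, 1 <= i, i < j <= pn P,
      (bi || (pr P i == None)) && (bj || (pr P j == None)) &
      x = (i, 2, (i,bi) :: gvec P (vsel bj bi i j) i)]) \/
  (exists j b t, [/\ s = (j,b)::(j,~~b)::t, 1 <= j <= pn P & x = (j,2,[::])]) \/
  (exists j rj, [/\ pr P j = Some rj, 1 <= j <= pn P, 0 < rj,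
      take rj s = nseq rj (j,true) & x = (j, rj, gvec P (pe P j) j)]) \/
  (exists j rj t, [/\ s = (j,false)::t, pr P j = Some rj, 1 <= j <= pn P &
      x = (j,1, nseq rj.-1 (j,true) ++ gvec P (pf P j) j)]).
Proof.
case: s => [|[j bj] t] //=.
rewrite mem_cat => /orP[H|H].
- case: t H => [|[i bi] t] //; rewrite mem_cat => /orP[H|H].
  + left; exists j, bj, i, bi, t.
    case: bj H; case: bi; rewrite /opt; case: ifP => // Hc; rewrite inE => /eqP -> /=.
    * by case/and3P: Hc => -> -> ->.
    * by case/andP: Hc => /and3P[-> -> ->] ->.
    * by case/andP: Hc => /and3P[-> -> ->] ->.
    * by move: Hc => /and3P[/and3P[-> -> ->] -> ->].
  + right; left; move: H; rewrite /opt; case: ifP => // /and4P[/eqP Eij Hb Hj Hjn].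
    rewrite inE => /eqP ->; exists j, bj, t; split => //; last by apply/andP.
    by subst i; case: bj bi Hb {Hj Hjn} => [] [].
- right; right; case E: (pr P j) H => [rj|] //; case: bj; rewrite /opt.
  + case: ifP => // /and4P[Hj Hjn Hr Ht]; rewrite inE => /eqP ->.
    left; exists j, rj; split => //; [by apply/andP| exact/eqP].
  + case: ifP => // /andP[Hj Hjn]; rewrite inE => /eqP ->.
    right; exists j, rj, t; split => //; by apply/andP.
Qed.

End Rels.

Lemma better_irr c : ~~ better c c.
Proof. by case: c => p [[i l] r]; rewrite /better /= !ltnn andbF. Qed.

Lemma better_trans a b c : better a b -> better b c -> better a c.
Proof.
case: a => p1 [[i1 l1] r1]; case: b => p2 [[i2 l2] r2]; case: c => p3 [[i3 l3] r3].
rewrite /better /=.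
case/orP=> [H1|/andP[/eqP E1 H1]]; case/orP=> [H2|/andP[/eqP E2 H2]].
- by rewrite (ltn_trans H1 H2).
- by subst; rewrite H1.
- by subst; rewrite H2.
- by subst; rewrite eqxx (ltn_trans H1 H2) orbT.
Qed.

Lemma cand_mem P w p x :
  ((p, x) \in candidates P w) = (p < size w) && (x \in redexes P (drop p w)).
Proof.
apply/flatten_mapP/andP.
- case=> q; rewrite mem_iota add0n => Hq /mapP [y Hy [-> ->]]; by split.
- case=> Hp Hx; exists p; first by rewrite mem_iota add0n.
  by apply/mapP; exists x.
Qed.

Definition Qinv (o : option (nat * (nat * nat * word))) (M : seq (nat * (nat * nat * word))) :=
  match o with
  | None => M = [::]
  | Some b => b \in M /\ forall c, c \in M -> ~~ better c b
  end.

Lemma foldl_inv L : forall acc M, Qinv acc M ->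
  Qinv (foldl (fun best c => match best with
                       | None => Some c
                       | Some b => if better c b then Some c else best
                       end) acc L) (M ++ L).
Proof.
elim: L => [|c L IH] acc M H /=; first by rewrite cats0.
rewrite -cat_rcons; apply: IH.
case: acc H => [b [Hb Hmin]|->] /=.
- case: ifP => Hcb /=.
  + split; first by rewrite mem_rcons inE eqxx.
    move=> c'; rewrite mem_rcons inE => /orP[/eqP ->|Hc']; first exact: better_irr.
    apply/negP => Hc'c; have := Hmin c' Hc'; by rewrite (better_trans Hc'c Hcb).
  + split; first by rewrite mem_rcons inE Hb orbT.
    move=> c'; rewrite mem_rcons inE => /orP[/eqP ->|Hc']; first by rewrite Hcb.
    exact: Hmin.
- split; first by rewrite inE.
  by move=> c'; rewrite inE => /eqP ->; apply: better_irr.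
Qed.

Lemma step_spec P w :
  match step P w with
  | None => candidates P w = [::]
  | Some w' => exists p i len rhs,
      [/\ (p, (i, len, rhs)) \in candidates P w,
          (forall c, c \in candidates P w -> ~~ better c (p, (i, len, rhs))) &
          w' = take p w ++ rhs ++ drop (p + len) w]
  end.
Proof.
rewrite /step /choose_redex.
have := @foldl_inv (candidates P w) None [::] erefl.
rewrite cat0s.
case: foldl => [[p [[i len] rhs]] [H1 H2]|] //=.
by exists p, i, len, rhs.
Qed.

Lemma winv_eq P s u v : wf P s u -> wf P s v -> eqH P s u v ->
  eqH P s (winv u) (winv v).
Proof.
move=> Hu Hv Huv.
transitivity (winv u ++ (v ++ winv v)); first by rewrite cancel_r // cats0; reflexivity.
transitivity (winv u ++ (u ++ winv v)).
  by apply: cat_proper; [reflexivity| apply: cat_proper; [symmetry|reflexivity]].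
by rewrite catA cancel_l //; reflexivity.
Qed.

Lemma wf_mono P s s' w : s <= s' -> wf P s' w -> wf P s w.
Proof.
move=> Hs /allP H; apply/allP => l /H /andP[H1 H2].
by rewrite H2 (leq_trans Hs H1).
Qed.

Lemma add3_le a b c : a + (c + b) <= c -> a = 0 /\ b = 0.
Proof. lia. Qed.

Lemma ge2 j : 0 < j -> j != 1 -> 2 <= j.
Proof. by case: j => [|[|]]. Qed.

Section Main.
Variable P : pcp.
Variable r1 : nat.
Variable sig : word -> word.
Hypothesis Hpcp : is_pcp P.
Hypothesis Hder : derived_ok P.
Hypothesis Hn1 : 1 <= pn P.
Hypothesis Hr1 : pr P 1 = Some r1.
Hypothesis Hendo : is_endo P 2 sig.
Hypothesis Hsig : forall j, 2 <= j <= pn P ->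
  eqH P 2 (sig [:: (j, true)]) (gvec P (pa P 1 j) 1).

Local Notation g1 := ((1, true) : letter).
Local Notation e := (gvec P (pe P 1) 1).

Lemma r1pos : 0 < r1.
Proof. by apply: Hpcp.1 Hr1; rewrite leqnn. Qed.

Definition subl (l : letter) : word :=
  if l.2 then gvec P (pa P 1 l.1) 1 else winv (gvec P (pa P 1 l.1) 1).
Definition sub (w : word) : word := flatten (map subl w).
Definition cnt (w : word) := count (pred1 g1) w.
Fixpoint V (w : word) : word :=
  match w with
  | [::] => [::]
  | l :: r => if l == g1 then V r else iter (cnt r) sub [:: l] ++ V r
  end.

Lemma sub_cat u v : sub (u ++ v) = sub u ++ sub v.
Proof. by rewrite /sub map_cat flatten_cat. Qed.

Lemma iter_sub_cat n u v : iter n sub (u ++ v) = iter n sub u ++ iter n sub v.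
Proof. by elim: n => //= n ->; rewrite sub_cat. Qed.

Lemma iter_sub_nil n : iter n sub [::] = [::].
Proof. by elim: n => //= n ->. Qed.

Lemma cnt_cat u v : cnt (u ++ v) = cnt u + cnt v.
Proof. exact: count_cat. Qed.

Lemma V_cat A B : V (A ++ B) = iter (cnt B) sub (V A) ++ V B.
Proof.
elim: A => [|l A IH] /=; first by rewrite iter_sub_nil.
case: ifP => _; first exact: IH.
by rewrite IH iter_sub_cat catA cnt_cat addnC iterD.
Qed.

Lemma V_nog1 w : cnt w = 0 -> V w = w.
Proof.
elim: w => //= l w IH; rewrite /cnt /=.
case: (eqVneq l g1) => [->|Hl] //=; rewrite add0n => Hw.
by rewrite Hw IH.
Qed.

Lemma V_g1s m w : V (nseq m g1 ++ w) = V w.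
Proof. by elim: m => //= m ->. Qed.

Lemma subl_wf l : wf P 2 (subl l).
Proof. by rewrite /subl; case: ifP => _; rewrite ?wf_winv gvec_wf. Qed.

Lemma sub_wf w : wf P 2 (sub w).
Proof. by elim: w => //= l w IH; rewrite wf_cat subl_wf. Qed.

Lemma iter_sub_wf n w : wf P 2 w -> wf P 2 (iter n sub w).
Proof. by case: n => //= n _; apply: sub_wf. Qed.

Lemma sig_eq u v : wf P 2 u -> wf P 2 v -> eqH P 2 u v -> eqH P 2 (sig u) (sig v).
Proof. exact: Hendo.2.1. Qed.

Lemma sig_cat u v : wf P 2 u -> wf P 2 v -> eqH P 2 (sig (u ++ v)) (sig u ++ sig v).
Proof. exact: Hendo.2.2. Qed.

Lemma sig_wf w : wf P 2 w -> wf P 2 (sig w).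
Proof. exact: Hendo.1. Qed.

Lemma sig_nil : eqH P 2 (sig [::]) [::].
Proof.
have Hx : wf P 2 (sig [::]) by apply: sig_wf.
have H := sig_cat (erefl : wf P 2 [::]) (erefl : wf P 2 [::]).
rewrite cat0s in H.
transitivity ((winv (sig [::]) ++ sig [::]) ++ sig [::]).
  by rewrite cancel_l //; reflexivity.
by rewrite -catA -H cancel_l //; reflexivity.
Qed.

Lemma sig_winv w : wf P 2 w -> eqH P 2 (sig (winv w)) (winv (sig w)).
Proof.
move=> Hw.
have Hiw : wf P 2 (winv w) by rewrite wf_winv.
have Hs : wf P 2 (sig w) by apply: sig_wf.
transitivity (sig (winv w) ++ (sig w ++ winv (sig w))).
  by rewrite cancel_r // cats0; reflexivity.
rewrite catA -sig_cat // sig_eq ?wf_cat ?Hiw ?Hw //; last exact: cancel_l.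
  by rewrite sig_nil; reflexivity.
by [].
Qed.

Lemma sig_sub w : wf P 2 w -> eqH P 2 (sig w) (sub w).
Proof.
elim: w => [|[k b] w IH] /=; first by move=> _; exact: sig_nil.
move=> /andP[Hk Hw].
have Hl : wf P 2 [:: (k,b)] by rewrite /wf /= Hk.
transitivity (sig [:: (k,b)] ++ sig w); first exact: (sig_cat Hl Hw).
rewrite IH //.
have -> : sub ((k,b) :: w) = subl (k,b) ++ sub w by [].
apply: cat_proper; last reflexivity.
case: b Hl => Hl; rewrite /subl /=; first exact: Hsig.
have Hl' : wf P 2 [:: (k,true)] by rewrite /wf /= Hk.
rewrite (_ : [:: (k,false)] = winv [:: (k,true)]) // sig_winv //.
apply: winv_eq; [exact: sig_wf| |exact: Hsig].
exact: (gvec_wf P (pa P 1 k) 1).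
Qed.

Lemma sub_eq u v : wf P 2 u -> wf P 2 v -> eqH P 2 u v -> eqH P 2 (sub u) (sub v).
Proof.
move=> Hu Hv Huv; rewrite -(sig_sub Hu) -(sig_sub Hv); exact: sig_eq.
Qed.

Lemma iter_sub_eq n u v : wf P 2 u -> wf P 2 v -> eqH P 2 u v ->
  eqH P 2 (iter n sub u) (iter n sub v).
Proof.
move=> Hu Hv Huv; elim: n => //= n IH.
by apply: sub_eq => //; apply: iter_sub_wf.
Qed.

Lemma good_ng1 l : goodl P l -> l != g1 -> 2 <= l.1 <= pn P.
Proof.
case: l => k b; rewrite /goodl /= => /andP[/andP[H1 H2] Hb] Hne.
case: (eqVneq k 1) => [Ek|Nk].
  by subst k; move: Hb Hne; rewrite Hr1 orbF => ->; rewrite eqxx.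
by rewrite H2 andbT; lia.
Qed.

Lemma good1 b : goodl P (1, b) -> b.
Proof. by rewrite /goodl /= Hr1 orbF => /andP[]. Qed.

Lemma wf_cnt w : wf P 2 w -> cnt w = 0.
Proof.
elim: w => //= [[k b] w] IH /andP[/andP[H1 _] Hw]; rewrite -/(cnt w) IH //.
have Hne : (k, b) != g1 by apply/eqP => -[Ek _]; subst k.
by rewrite addn0; apply/eqP; rewrite eqb0.
Qed.

Lemma V_wf w : all (goodl P) w -> wf P 2 (V w).
Proof.
elim: w => //= l w IH /andP[Hl Hw]; case: (eqVneq l g1) => [_|Hne]; first exact: IH.
rewrite wf_cat IH // andbT; apply: iter_sub_wf.
by rewrite /wf /= andbT good_ng1.
Qed.

Lemma pc_inv j : 1 < j <= pn P -> pr P j = None ->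
  eqH P 2 (gvec P (pc P 1 j) 1) (winv (gvec P (pa P 1 j) 1)).
Proof.
move=> Hj Hpj.
have HAC : eqH P 2 (gvec P (pa P 1 j) 1 ++ gvec P (pc P 1 j) 1) [::].
  by apply: Hder.1.
transitivity ((winv (gvec P (pa P 1 j) 1) ++ gvec P (pa P 1 j) 1) ++ gvec P (pc P 1 j) 1).
  by rewrite cancel_l ?gvec_wf //; reflexivity.
by rewrite -catA HAC cats0; reflexivity.
Qed.

Lemma local_gen A seg rhs B : cnt seg = cnt rhs -> wf P 2 (V seg) -> wf P 2 (V rhs) ->
  eqH P 2 (V rhs) (V seg) ->
  cnt (A ++ rhs ++ B) = cnt (A ++ seg ++ B) /\ eqH P 2 (V (A ++ rhs ++ B)) (V (A ++ seg ++ B)).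
Proof.
move=> Hc Hs Hr H; split; first by rewrite !cnt_cat Hc.
rewrite !V_cat !cnt_cat Hc.
apply: cat_proper; first reflexivity.
apply: cat_proper; last reflexivity.
exact: iter_sub_eq.
Qed.

Lemma local_nog1 A seg rhs B : wf P 2 seg -> wf P 2 rhs -> eqH P 2 rhs seg ->
  cnt (A ++ rhs ++ B) = cnt (A ++ seg ++ B) /\ eqH P 2 (V (A ++ rhs ++ B)) (V (A ++ seg ++ B)).
Proof.
move=> Hs Hr H; apply: local_gen; rewrite ?V_nog1 ?wf_cnt //.
Qed.

Lemma redex_pair_mem j b B : 2 <= j <= pn P -> b || (pr P j == None) ->
  (1, 2, g1 :: gvec P (vsel P b true 1 j) 1) \in redexes P ((j,b) :: g1 :: B).
Proof.
move=> /andP[Hj Hjn] Hb.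
rewrite /redexes !mem_cat; apply/orP; left.
have Hok : [&& 1 <= 1, 1 < j & j <= pn P] by rewrite Hj Hjn.
have Hok2 : 1 < j <= pn P by rewrite Hj Hjn.
by case: b Hb => /= Hb; rewrite /opt ?Hok2 ?Hb /= ?inE ?eqxx.
Qed.

Lemma redex_pow_mem B : (1, r1, e) \in redexes P (nseq r1 g1 ++ B).
Proof.
have Hr := r1pos.
have Ht : take r1 (nseq r1 g1 ++ B) = nseq r1 g1 by rewrite take_size_cat ?size_nseq.
have [r Er] : exists r, r1 = r.+1 by case: (r1) Hr => // r; exists r.
have Hs : nseq r1 g1 ++ B = g1 :: (nseq r g1 ++ B) by rewrite Er.
rewrite Hs /redexes mem_cat; apply/orP; right.
rewrite Hr1 /opt -Hs Ht eqxx Hn1 Hr /=.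
by rewrite inE.
Qed.

Lemma cnt_nseq_g1 m : cnt (nseq m g1) = m.
Proof. by elim: m => //= m; rewrite /cnt /= => ->. Qed.

Lemma e_good : all (goodl P) e.
Proof.
apply: gvec_good => k Hk; have [_ [He _]] := Hpcp.
by apply: He Hr1.
Qed.

Lemma no_prefix w A s' s'' : w = A ++ s' -> all (goodl P) A -> cnt A = 0 ->
  s' = g1 :: s'' -> A != [::] ->
  exists c, c \in candidates P w /\ better c (size A, (1, r1, e)).
Proof.
move=> Ew; case/lastP: A Ew => [//|A' [j b]] Ew.
rewrite all_rcons => /andP[Hl HA'].
rewrite -cats1 cnt_cat => Hc Es _.
have Hne : (j, b) != g1.
  by apply/negP => /eqP Ejb; move: Hc; rewrite Ejb /cnt /=; lia.
have Hj := good_ng1 Hl Hne.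
have Hb : b || (pr P j == None) by case/andP: Hl.
exists (size A', (1, 2, g1 :: gvec P (vsel P b true 1 j) 1)); split.
- have Ew' : w = A' ++ (j, b) :: g1 :: s'' by rewrite Ew Es cat_rcons.
  rewrite cand_mem Ew' drop_size_cat // size_cat /= addnS ltnS leq_addr /=.
  exact: redex_pair_mem.
- by rewrite /better /= ?size_cat ?size_rcons /= ?addn1 ltnSn.
Qed.

Lemma step_some w p i len rhs :
  all (goodl P) w -> cnt w <= r1 ->
  (p, (i, len, rhs)) \in candidates P w ->
  (forall c, c \in candidates P w -> ~~ better c (p, (i, len, rhs))) ->
  all (goodl P) (take p w ++ rhs ++ drop (p + len) w) /\
  ((cnt (take p w ++ rhs ++ drop (p + len) w) = cnt w /\
    eqH P 2 (V (take p w ++ rhs ++ drop (p + len) w)) (V w)) \/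
   (cnt w = r1 /\ cnt (take p w ++ rhs ++ drop (p + len) w) = 0 /\
    V (take p w ++ rhs ++ drop (p + len) w) = e ++ V w)).
Proof.
have [Hpos [He [Ha [Hb [Hcc [Hdd Hff]]]]]] := Hpcp.
move=> Hg Hc Hmem Hmin.
move: (Hmem); rewrite cand_mem => /andP[Hp Hx].
have Hd : drop (p + len) w = drop len (drop p w) by rewrite drop_drop addnC.
rewrite Hd.
have Ew : w = take p w ++ drop p w by rewrite cat_take_drop.
have HsA : size (take p w) = p by rewrite size_takel // ltnW.
move: (take p w) (drop p w) Ew HsA Hx => A s Ew HsA Hx.
have := Hg; rewrite {1}Ew all_cat => /andP[HgA HgS].
rewrite Ew.
have [[j [bj [ii [bi [t [Es Hii Hij Hcond Ex]]]]]]|[[j [b [t [Es Hj Ex]]]]|[[j [rj [Hpj Hj Hrj Htake Ex]]]|[j [rj [t [Es Hpj Hj Ex]]]]]]] := redex_shape Hx; case: Ex => ? ? ?; subst i len rhs.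
-
  rewrite Es /= drop0; rewrite Es /= in HgS; case/and3P: HgS => Hgj Hgi Hgt.
  case/andP: Hcond => Hbi Hbj.
  have HgG := gvec_good (vsel_range Hpcp Hii Hij Hbi Hbj).
  split; first by rewrite !all_cat /= HgA Hgi all_cat HgG Hgt.
  left.
  case: (eqVneq ii 1) => [Ei|Ni].
  + subst ii.
    have Hbt : bi = true := good1 Hgi.
    subst bi.
    have Hj2 : 1 < j by case/andP: Hij.
    have Hne : (j, bj) != g1 by apply/eqP => -[Ej _]; subst j.
    have HGwf : wf P 2 (gvec P (vsel P bj true 1 j) 1) by exact: gvec_wf.
    set G := gvec P (vsel P bj true 1 j) 1.
    have -> : A ++ (1, true) :: G ++ t = A ++ (g1 :: G) ++ t by [].
    have -> : A ++ [:: (j,bj), (1,true) & t] = A ++ [:: (j,bj); g1] ++ t by [].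
    have := @local_gen A [:: (j, bj); g1] (g1 :: G) t.
    have EVs : V [:: (j, bj); g1] = subl (j, bj).
      by rewrite /= (negbTE Hne) /sub /= !cats0.
    have EVr : V (g1 :: G) = G.
      by rewrite /= V_nog1 // wf_cnt.
    rewrite EVs EVr; apply.
    * rewrite /cnt /= (negbTE Hne) -/(cnt G) (wf_cnt HGwf).
      by [].
    * exact: subl_wf.
    * exact: HGwf.
    * rewrite /G; case: (bj) Hbj => /= Hbj; rewrite /subl /=; first reflexivity.
      by apply: pc_inv => //; apply/eqP.
  + have Hii2 : 2 <= ii.
      by move: Hii Ni; case: (ii) => [|[|k]].
    case/andP: (Hij) => Hij1 Hij2.
    have Hiin : ii <= pn P := leq_trans (ltnW Hij1) Hij2.
    have Hj2 : 2 <= j := leq_trans Hii2 (ltnW Hij1).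
    set G := gvec P (vsel P bj bi ii j) ii.
    have -> : A ++ (ii, bi) :: G ++ t = A ++ ((ii, bi) :: G) ++ t by [].
    have -> : A ++ [:: (j,bj), (ii,bi) & t] = A ++ [:: (j,bj); (ii, bi)] ++ t by [].
    apply: (@local_nog1 A [:: (j, bj); (ii, bi)] ((ii, bi) :: G) t).
    * by rewrite /wf /= Hj2 Hij2 Hii2 Hiin.
    * rewrite /wf /= Hii2 Hiin /=.
      exact: (@wf_mono _ 2 ii.+1 _ (leqW Hii2) (gvec_wf _ _ _)).
    * symmetry; apply: rel_pair => //.
-
  case/andP: Hj => Hj1 Hjn.
  rewrite Es /= drop0; rewrite Es /= in HgS; case/and3P: HgS => Hg1 Hg2 Hgt.
  have Hj2 : 2 <= j.
    apply: ge2 => //; apply/eqP => Ej; subst j.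
    by have := good1 Hg1; have := good1 Hg2; case: (b).
  split; first by rewrite !all_cat HgA Hgt.
  left.
  have -> : A ++ [:: (j,b), (j,~~b) & t] = A ++ [:: (j,b); (j,~~b)] ++ t by [].
  apply: (@local_nog1 A [:: (j,b); (j,~~b)] [::] t) => //.
  + by rewrite /wf /= Hj2 Hjn.
  + by symmetry; apply: rel_eqH; apply: dr_cancel; rewrite Hj2 Hjn.
-
  case/andP: Hj => Hj1 Hjn.
  have Es : s = nseq rj (j,true) ++ drop rj s by rewrite -Htake cat_take_drop.
  move: Es; move: (drop rj s) => B Es.
  rewrite Es; rewrite Es all_cat in HgS; case/andP: HgS => _ HgB.
  case: (eqVneq j 1) => [Ej|Nj].
  + subst j.
    move: Hpj; rewrite Hr1 => -[Erj]; subst rj.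
    have Hcw : cnt A + (r1 + cnt B) <= r1.
      by move: Hc; rewrite Ew Es !cnt_cat cnt_nseq_g1.
    have [HcA HcB] := add3_le Hcw.
    have Es' : s = g1 :: (nseq r1.-1 g1 ++ B).
      by rewrite Es; case: (r1) r1pos.
    have HA : A = [::].
      apply/eqP; apply/negPn/negP => HAne.
      have [c [Hcm Hbt]] := no_prefix Ew HgA HcA Es' HAne.
      by have := Hmin c Hcm; rewrite -HsA Hbt.
    rewrite HA /=.
    split; first by rewrite all_cat e_good HgB.
    right.
    have Hce : cnt e = 0 by apply: wf_cnt; apply: gvec_wf.
    rewrite !cnt_cat cnt_nseq_g1 HcB Hce addn0; split => //; split => //.
    by rewrite V_g1s !V_nog1 // cnt_cat Hce HcB.
  + have Hj2 : 2 <= j by apply: ge2.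
    split.
      rewrite !all_cat HgA HgB andbT /=; apply: gvec_good => k Hk.
      by apply: He Hpj.
    left.
    apply: (@local_nog1 A (nseq rj (j,true)) (gvec P (pe P j) j) B).
    * by rewrite /wf all_nseq /= Hj2 Hjn orbT.
    * exact: (@wf_mono _ 2 j.+1 _ (leqW Hj2) (gvec_wf _ _ _)).
    * by symmetry; apply: rel_eqH; apply: dr_pow Hpj; rewrite Hj2 Hjn.
-
  case/andP: Hj => Hj1 Hjn.
  rewrite Es /= drop0; rewrite Es /= in HgS; case/andP: HgS => Hg1 Hgt.
  have Hj2 : 2 <= j.
    apply: ge2 => //; apply/eqP => Ej; subst j.
    by have := good1 Hg1.
  split.
    have Hgj : goodl P (j,true) by rewrite /goodl /= Hj1 Hjn.
    have HgF : all (goodl P) (gvec P (pf P j) j).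
      by apply: gvec_good => k Hk; apply: Hff Hpj.
    by rewrite !all_cat HgA Hgt all_nseq Hgj HgF orbT.
  left.
  have -> : A ++ (j, false) :: t = A ++ [:: (j, false)] ++ t by [].
  apply: (@local_nog1 A [:: (j, false)] (nseq rj.-1 (j,true) ++ gvec P (pf P j) j) t).
  + by rewrite /wf /= Hj2 Hjn.
  + rewrite wf_cat /wf all_nseq /= Hj2 Hjn orbT /=.
    exact: (@wf_mono _ 2 j.+1 _ (leqW Hj2) (gvec_wf _ _ _)).
  + by symmetry; apply: rel_f => //; rewrite Hj2.
Qed.

Lemma split_g1 w : (exists A l B, w = A ++ l :: g1 :: B /\ l != g1) \/
  (exists B, w = nseq (cnt w) g1 ++ B /\ cnt B = 0).
Proof.
elim: w => [|x w IH]; first by right; exists [::].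
case: IH => [[A [l [B [Ew Hl]]]]|[B [Ew HB]]].
- by left; exists (x :: A), l, B; rewrite Ew.
- case: (eqVneq x g1) => [Ex|Nx].
  + right; exists B; split => //.
    by rewrite Ex /cnt /= ?eqxx ?add1n -/(cnt w) add0n -Ew.
  + move: Ew; case E: (cnt w) => [|c] Ew.
    * right; exists (x :: w); rewrite /cnt /= (negbTE Nx) -/(cnt w) E.
      by split.
    * by left; exists [::], x, (nseq c g1 ++ B); rewrite Ew.
Qed.

Lemma step_none w : all (goodl P) w -> cnt w <= r1 -> candidates P w = [::] ->
  cnt w < r1 /\ exists B, w = nseq (cnt w) g1 ++ B /\ cnt B = 0.
Proof.
move=> Hg Hc Hcand.
case: (split_g1 w) => [[A [[j b] [B [Ew Hl]]]]|[B [Ew HB]]].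
- exfalso.
  have Hgl : goodl P (j, b).
    by move: Hg; rewrite Ew all_cat /= => /and3P[_ -> _].
  have Hj := good_ng1 Hgl Hl.
  have Hb : b || (pr P j == None) by case/andP: Hgl.
  have : (size A, (1, 2, g1 :: gvec P (vsel P b true 1 j) 1)) \in candidates P w.
    rewrite cand_mem Ew drop_size_cat // size_cat /= addnS ltnS leq_addr /=.
    exact: redex_pair_mem.
  by rewrite Hcand.
- split; last by exists B.
  rewrite ltn_neqAle Hc andbT; apply/eqP => Ecw.
  move: Ew; rewrite Ecw => Ew.
  have : (0, (1, r1, e)) \in candidates P w.
    rewrite cand_mem drop0 Ew redex_pow_mem andbT size_cat size_nseq.
    exact: ltn_addr r1pos.
  by rewrite Hcand.
Qed.

Lemma phase k : forall w v, all (goodl P) w -> collect_fuel P k w = Some v -> cnt w <= r1 ->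
  (cnt w = r1 -> eqH P 2 v (e ++ V w)) /\
  (cnt w < r1 -> exists v', v = nseq (cnt w) g1 ++ v' /\ eqH P 2 v' (V w)).
Proof.
elim: k => [|k IH] w v Hg Hf Hc; move: Hf => /=; have := step_spec P w;
  case: (step P w) => [w'|] Hspec Hf //.
- have [Hlt [B [Ew HB]]] := step_none Hg Hc Hspec.
  case: Hf => <-.
  have EV : V w = B by rewrite {1}Ew V_g1s V_nog1.
  split; first by move=> Ecw; move: Hlt; rewrite Ecw ltnn.
  by move=> _; exists B; split => //; rewrite EV; reflexivity.
- have [p [i [len [rhs [Hmem Hmin Ew']]]]] := Hspec; subst w'.
  have [Hg' [[Hcnt HV]|[Hcr [Hc0 HV]]]] := step_some Hg Hc Hmem Hmin.
  + have [|IH1 IH2] := IH _ v Hg' Hf; first by rewrite Hcnt.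
    split.
    * move=> Ecw; rewrite -HV; apply: IH1; by rewrite Hcnt.
    * move=> Hlt; have [|v' [Ev Hv']] := IH2; first by rewrite Hcnt.
      exists v'; rewrite -Hcnt; split => //; rewrite Hv' HV; reflexivity.
  + have [|_ IH2] := IH _ v Hg' Hf; first by rewrite Hc0.
    have [|v' [Ev Hv']] := IH2; first by rewrite Hc0 r1pos.
    split; last by rewrite Hcr ltnn.
    move=> _; rewrite Ev Hc0 /= Hv' HV; reflexivity.
- have [Hlt [B [Ew HB]]] := step_none Hg Hc Hspec.
  case: Hf => <-.
  have EV : V w = B by rewrite {1}Ew V_g1s V_nog1.
  split; first by move=> Ecw; move: Hlt; rewrite Ecw ltnn.
  by move=> _; exists B; split => //; rewrite EV; reflexivity.
Qed.

Lemma winv_cons l w : winv (l :: w) = winv w ++ [:: (l.1, ~~ l.2)].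
Proof. by rewrite /winv /= rev_cons -cats1. Qed.

Lemma sub_winv w : sub (winv w) = winv (sub w).
Proof.
elim: w => [|[k b] w IH] //.
rewrite winv_cons sub_cat IH.
have -> : sub ((k, b) :: w) = subl (k, b) ++ sub w by [].
rewrite winv_cat /sub /= cats0; congr (_ ++ _).
by rewrite /subl /=; case: b => //=; rewrite winvK.
Qed.

Lemma iter_sub_winv n w : iter n sub (winv w) = winv (iter n sub w).
Proof. by elim: n => //= n ->; rewrite sub_winv. Qed.

Lemma iter_sig n x : wf P 2 x -> wf P 2 (iter n sig x) /\ eqH P 2 (iter n sig x) (iter n sub x).
Proof.
move=> Hx; elim: n => [|n [IH1 IH2]] /=; first by split => //; reflexivity.
split; first exact: sig_wf.
transitivity (sig (iter n sub x)); first by apply: sig_eq => //; apply: iter_sub_wf.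
by apply: sig_sub; apply: iter_sub_wf.
Qed.

Lemma iter_sig_eq n u v : wf P 2 u -> wf P 2 v -> eqH P 2 u v ->
  eqH P 2 (iter n sig u) (iter n sig v).
Proof.
move=> Hu Hv H; rewrite (iter_sig n Hu).2 (iter_sig n Hv).2; exact: iter_sub_eq.
Qed.

Lemma conj_cancel a u : wf P 2 a -> eqH P 2 (winv a ++ (a ++ u ++ winv a) ++ a) u.
Proof.
move=> Ha.
have -> : winv a ++ (a ++ u ++ winv a) ++ a = (winv a ++ a) ++ u ++ (winv a ++ a).
  by rewrite !catA.
by rewrite cancel_l // cats0; reflexivity.
Qed.

Lemma left_cancel a u v : wf P 2 a -> eqH P 2 (a ++ u) (a ++ v) -> eqH P 2 u v.
Proof.
move=> Ha H.
transitivity ((winv a ++ a) ++ u); first by rewrite cancel_l //; reflexivity.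
rewrite -catA H catA cancel_l //; reflexivity.
Qed.

Lemma e_wf : wf P 2 e.
Proof. exact: gvec_wf. Qed.

Lemma gen_rel j : 2 <= j <= pn P ->
  same_collection P ((j, true) :: nseq r1 (1, true)) ((j, true) :: e) ->
  eqH P 2 (e ++ iter r1 sub [:: (j, true)]) ((j, true) :: e).
Proof.
move=> /andP[Hj Hjn] [v [[k1 H1] [k2 H2]]].
have Hne : (j, true) != g1 by apply/eqP => -[Ej]; subst j.
have Hgj : goodl P (j, true) by rewrite /goodl /= Hjn (ltnW Hj).
have Hg1 : goodl P g1 by rewrite /goodl /= Hn1.
have Hgw1 : all (goodl P) ((j, true) :: nseq r1 g1) by rewrite /= Hgj all_nseq Hg1 orbT.
have Hc1 : cnt ((j, true) :: nseq r1 g1) = r1.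
  by rewrite /cnt /= (negbTE Hne) -/(cnt _) cnt_nseq_g1.
have [P1 _] := phase Hgw1 H1 (eq_leq Hc1).
have HV1 : V ((j, true) :: nseq r1 g1) = iter r1 sub [:: (j, true)].
  rewrite /= (negbTE Hne) -/(cnt _) cnt_nseq_g1.
  by have := V_g1s r1 [::]; rewrite cats0 => ->; rewrite cats0.
have Hwf2 : wf P 2 ((j, true) :: e) by rewrite /wf /= Hj Hjn; exact: e_wf.
have Hgw2 : all (goodl P) ((j, true) :: e) by rewrite /= Hgj e_good.
have Hc2 := wf_cnt Hwf2.
have [|_ P2] := phase Hgw2 H2; first by rewrite Hc2.
have [|v' [Ev Hv']] := P2; first by rewrite Hc2 r1pos.
move: Ev Hv'; rewrite Hc2 V_nog1 //= => <- Hv'.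
rewrite -HV1 -P1 //; exact: Hv'.
Qed.

Lemma part_a : (forall j, 1 < j <= pn P ->
      same_collection P ((j, true) :: nseq r1 (1, true)) ((j, true) :: e)) ->
   (forall x, wf P 2 x -> eqH P 2 (iter r1 sig x) (winv e ++ x ++ e)) /\
   is_auto P 2 sig.
Proof.
move=> Hcoll.
have Hlet : forall j, 2 <= j <= pn P ->
    eqH P 2 (iter r1 sub [:: (j,true)]) (winv e ++ [:: (j,true)] ++ e).
  move=> j Hj; have H := gen_rel Hj (Hcoll j Hj).
  apply: (left_cancel e_wf).
  transitivity ((j,true) :: e); first exact: H.
  rewrite catA cancel_r ?e_wf //; reflexivity.
have Hsub : forall x, wf P 2 x -> eqH P 2 (iter r1 sub x) (winv e ++ x ++ e).
  elim => [|[k b] x IH] /=.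
    by move=> _; rewrite iter_sub_nil cancel_l ?e_wf //; reflexivity.
  move=> /andP[Hk Hx].
  have -> : iter r1 sub ((k,b)::x) = iter r1 sub [:: (k,b)] ++ iter r1 sub x.
    by rewrite -iter_sub_cat.
  have Hl : eqH P 2 (iter r1 sub [:: (k,b)]) (winv e ++ [:: (k,b)] ++ e).
    case: b; first exact: Hlet.
    rewrite (_ : [:: (k,false)] = winv [:: (k,true)]) // iter_sub_winv.
    transitivity (winv (winv e ++ [:: (k,true)] ++ e)).
      apply: winv_eq; [apply: iter_sub_wf; by rewrite /wf /= Hk| |exact: Hlet].
      by rewrite !wf_cat wf_winv e_wf /wf /= Hk.
    rewrite !winv_cat winvK -catA; reflexivity.
  rewrite Hl (IH Hx).
  have -> : (winv e ++ [:: (k,b)] ++ e) ++ (winv e ++ x ++ e) =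
      (winv e ++ [:: (k,b)]) ++ (e ++ winv e) ++ (x ++ e) by rewrite !catA.
  rewrite cancel_r ?e_wf //= -catA; reflexivity.
have Hsa : forall x, wf P 2 x -> eqH P 2 (iter r1 sig x) (winv e ++ x ++ e).
  by move=> x Hx; rewrite (iter_sig r1 Hx).2; exact: Hsub.
have [r Er] : exists r, r1 = r.+1 by case: (r1) r1pos => // r; exists r.
have Hwie : wf P 2 (winv e) by rewrite wf_winv e_wf.
split => //; split => //; split.
- move=> u v Hu Hv H.
  have Hiter : eqH P 2 (iter r1 sig u) (iter r1 sig v).
    by rewrite Er !iterSr; apply: iter_sig_eq => //; apply: sig_wf.
  rewrite (Hsa u Hu) (Hsa v Hv) in Hiter.
  have C1 := conj_cancel u Hwie; have C2 := conj_cancel v Hwie.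
  rewrite winvK in C1 C2.
  rewrite -C1 -C2 Hiter; reflexivity.
- move=> y Hy.
  have Hz : wf P 2 (e ++ y ++ winv e) by rewrite !wf_cat e_wf Hy Hwie.
  exists (iter r sig (e ++ y ++ winv e)); split; first exact: (iter_sig r Hz).1.
  have -> : sig (iter r sig (e ++ y ++ winv e)) = iter r1 sig (e ++ y ++ winv e).
    by rewrite Er.
  rewrite (Hsa _ Hz); exact: conj_cancel e_wf.
Qed.

Lemma nseqS_cat (m : nat) (x : letter) : nseq m.+1 x = nseq m x ++ [:: x].
Proof. by elim: m => //= m <-. Qed.

Lemma first_step : step P (nseq r1.+1 g1) = Some (e ++ [:: g1]).
Proof.
have Hmem0 : (0, (1, r1, e)) \in candidates P (nseq r1.+1 g1).
  by rewrite cand_mem drop0 size_nseq nseqS_cat redex_pow_mem.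
have := step_spec P (nseq r1.+1 g1); case: step => [w'|] Hs; last by rewrite Hs in Hmem0.
have [p [i [len [rhs [Hmem Hmin ->]]]]] := Hs.
move: (Hmem); rewrite cand_mem => /andP[Hp Hx].
rewrite size_nseq in Hp; rewrite drop_nseq in Hx.
have [[j [bj [ii [bi [t [Es Hii Hij Hcond Ex]]]]]]|[[j [b [t [Es Hj Ex]]]]|[[j [rj [Hpj Hj Hrj Htake Ex]]]|[j [rj [t [Es Hpj Hj Ex]]]]]]] := redex_shape Hx.
- exfalso; move: Es Hij; case: (r1.+1 - p) => [|[|m]] //= [Ej _ Ei _ _]; subst.
  by rewrite ltnn.
- exfalso; move: Es; case: (r1.+1 - p) => [|[|m]] //= [_ Eb _ Eb' _].
  by move: Eb'; rewrite -Eb.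
- case: Ex => ? ? ?; subst i len rhs.
  have Ej : j = 1.
    move: Htake; case: (r1.+1 - p) => [|m]; case: (rj) Hrj => [|r'] //= _.
    by case.
  subst j; move: Hpj; rewrite Hr1 => -[Erj]; subst rj.
  have := Hmin _ Hmem0; rewrite /better /=.
  case: p {Hmem Hmin Hp Hx Htake} => [|p] //= _.
  have -> : (1,true) :: nseq r1 (1,true) = nseq r1.+1 g1 by [].
  by rewrite add0n drop_nseq subSnn.
- exfalso; move: Es; case: (r1.+1 - p) => [|m] //= [_ Eb].
Qed.

Lemma part_b : same_collection P (nseq r1.+1 (1, true)) ((1, true) :: e) ->
   eqH P 2 (sig e) e.
Proof.
move=> [v [[k3 H3] [k4 H4]]].
move: H3; case: k3 => [|k3] /=; rewrite first_step // => H3.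
have Hg1 : goodl P g1 by rewrite /goodl /= Hn1.
have Hce : cnt e = 0 := wf_cnt e_wf.
have Hgw3 : all (goodl P) (e ++ [:: g1]) by rewrite all_cat e_good /= Hg1.
have Hc3 : cnt (e ++ [:: g1]) = 1 by rewrite cnt_cat Hce.
have HV3 : V (e ++ [:: g1]) = sub e ++ [::].
  by rewrite V_cat V_nog1.
have Hgw4 : all (goodl P) (g1 :: e) by rewrite /= Hg1 e_good.
have Hc4 : cnt (g1 :: e) = 1 by rewrite /cnt /= -/(cnt e) Hce.
have HV4 : V (g1 :: e) = e by rewrite /= V_nog1.
have Hr := r1pos.
have [|A1 B1] := phase Hgw3 H3; first by rewrite Hc3.
have [|A2 B2] := phase Hgw4 H4; first by rewrite Hc4.
rewrite (sig_sub e_wf).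
case: (eqVneq r1 1) => [E1|N1].
- have X1 := A1 (esym (etrans E1 (esym Hc3))); have X2 := A2 (esym (etrans E1 (esym Hc4))).
  rewrite HV3 cats0 in X1; rewrite HV4 in X2.
  apply: (left_cancel e_wf); rewrite -X1 X2; reflexivity.
- have Hlt : 1 < r1 by move: Hr N1; case: (r1) => [|[|]].
  have [|v1 [Ev1 Hv1]] := B1; first by rewrite Hc3.
  have [|v2 [Ev2 Hv2]] := B2; first by rewrite Hc4.
  rewrite Hc3 in Ev1; rewrite Hc4 in Ev2.
  rewrite Ev1 in Ev2; case: Ev2 => Ev; subst v2.
  rewrite HV3 cats0 in Hv1; rewrite HV4 in Hv2.
  rewrite -Hv1 Hv2; reflexivity.
Qed.
End Main.

Theorem lemma11 (P : pcp) (r1 : nat) (sig : word -> word) :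
  is_pcp P -> derived_ok P -> 1 <= pn P ->
  pr P 1 = Some r1 ->
  consistent P 2 ->
  is_endo P 2 sig ->
  (forall j, 2 <= j <= pn P -> eqH P 2 (sig [:: (j, true)]) (gvec P (pa P 1 j) 1)) ->
  ((forall j, 1 < j <= pn P ->
      same_collection P ((j, true) :: nseq r1 (1, true)) ((j, true) :: gvec P (pe P 1) 1)) ->
   (forall x, wf P 2 x ->
      eqH P 2 (iter r1 sig x) (winv (gvec P (pe P 1) 1) ++ x ++ gvec P (pe P 1) 1)) /\
   is_auto P 2 sig) /\
  ((forall j, 1 < j <= pn P ->
      same_collection P ((j, true) :: nseq r1 (1, true)) ((j, true) :: gvec P (pe P 1) 1)) ->
   same_collection P (nseq r1.+1 (1, true)) ((1, true) :: gvec P (pe P 1) 1) ->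
   eqH P 2 (sig (gvec P (pe P 1) 1)) (gvec P (pe P 1) 1)).
Proof.
move=> Hpcp Hder Hn1 Hr1 _ Hendo Hsig; split.
- exact: (part_a Hpcp Hder Hn1 Hr1 Hendo Hsig).
- move=> _; exact: (part_b Hpcp Hder Hn1 Hr1 Hendo Hsig).
Qed.
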